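(* Let $T_+$, $T_-$, $T_0$ be ordered (classical or virtual) tangle diagrams which coincide, including the orderings of their endpoints, outside a small disk, inside which $T_+$ consists of a positive crossing of two oriented arcs, $T_-$ of a negative crossing of the same two oriented arcs, and $T_0$ of the orientation-respecting smoothing of that crossing. Then $$\nabla(T_+)-\nabla(T_-)=z\,\nabla(T_0).$$
   Context: An $n$-tangle ($n\ge 1$) is a collection of $n$ disjoint oriented intervals (''strings'') and finitely many oriented circles (''closed components'') properly embedded in the 3-ball with string endpoints at $2n$ prescribed boundary points, represented by diagrams; virtual diagrams may also contain virtual crossings. For a string, its source is its input and its target its output. A tangle with $n$ strings is ordered if its $2n$ endpoints are numbered by integers $j_1<\dots<j_{2n}$ (up to monotone relabeling) so that every input receives some $j_{2k-1}$ and every output some $j_{2k}$; the ordering is coherent if for each $k$ the string with input $j_{2k-1}$ has output $j_{2k}$. For an ordered tangle diagram $D$: a state $S$ is a set of classical crossings; $D(S)$ is obtained by smoothing each crossing of $S$ respecting orientations and inherits the endpoint numbering. $S$ is coherent if $D(S)$ has no closed components and its ordering is coherent. For coherent $S$, traverse $D(S)$ along the string from $j_1$ to $j_2$, then the string from $j_3$ to $j_4$, etc.; the neighborhood of each smoothed crossing is passed twice, and $S$ is descending if for each crossing of $S$ its neighborhood is first entered along the former overpass. $\operatorname{sign}(S)$ is the product of local writhes of the crossings of $S$. Define $c_n(D)=\sum\operatorname{sign}(S)$ over descending states with $n$ crossings and $\nabla(D)=\sum_{n\ge0}c_n(D)z^n\in\mathbb Z[z]$; this is an invariant of ordered tangles.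 *)

(* Defs.v *)
From HB Require Import structures.
From mathcomp Require Import all_boot all_order all_algebra all_fingroup.
Set Implicit Arguments. Unset Strict Implicit. Unset Printing Implicit Defensive.
Import GRing.Theory.
Local Open Scope ring_scope.

(* A tangle diagram with [n] strings on a finite set [N] of "nodes" (small disks).
   Ends of arcs:
   - [inl k] as an outgoing end = boundary point j_{2k+1} (0-based position 2k),
     an input (source of a string); as an incoming end = boundary point at
     0-based position 2k+1, an output (target of a string).  Thus the ordering
     condition "inputs get odd j's, outputs get even j's" is built in.
   - [inr (v, b)] : the exit (as outgoing end) / entrance (as incoming end)
     of node [v] along its strand [b] ([true] = over strand, [false] = under).
   [link x] is the incoming end reached by following the oriented arc that
   starts at the outgoing end [x] (virtual crossings are invisible).
   [kind v] = [Some true] : a positive classical crossing,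
              [Some false] : a negative classical crossing,
              [None] : no crossing; the disk contains the orientation-respecting
                       smoothing: entrance (v,b) continues to exit (v, ~~b).
   For a classical crossing, entrance (v,b) continues to exit (v,b). *)
Record tdiag (n : nat) (N : finType) := TDiag {
  kind : N -> option bool;
  link : {perm ('I_n + (N * bool))}
}.

Section Nabla.
Variables (n : nat) (N : finType).
Implicit Types (D : tdiag n N) (S : {set N}).

Definition pass D (e : N * bool) : N * bool :=
  (e.1, if kind D e.1 is None then ~~ e.2 else e.2).

Fixpoint walk_aux D (fuel : nat) (x : 'I_n + (N * bool))
  : seq (N * bool) * option 'I_n :=
  match fuel with
  | 0 => ([::], None)
  | f.+1 =>
    match link D x with
    | inl k => ([::], Some k)
    | inr e => let r := walk_aux D f (inr (pass D e)) in (e :: r.1, r.2)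
    end
  end.

(* the string starting at input k (fuel is sufficient: no entrance repeats) *)
Definition walk D (k : 'I_n) := walk_aux D (2 * #|N|).+1 (inl k).

Definition crossings D : {set N} := [set v | kind D v != None].

Definition smoothS D S : tdiag n N :=
  TDiag (fun v => if v \in S then None else kind D v) (link D).

Definition no_closed D : bool :=
  [forall e : N * bool, [exists k : 'I_n, e \in (walk D k).1]].

(* the ordering is coherent: string from j_{2k-1} ends at j_{2k} *)
Definition coherent_order D : bool :=
  [forall k : 'I_n, (walk D k).2 == Some k].

Definition coherent D S : bool :=
  no_closed (smoothS D S) && coherent_order (smoothS D S).

Definition traversal D : seq (N * bool) :=
  flatten [seq (walk D k).1 | k <- enum 'I_n].

Definition descending D S : bool :=
  [forall v in S, index (v, true) (traversal (smoothS D S))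
                   < index (v, false) (traversal (smoothS D S))]%N.

Definition sgnS D S : int :=
  \prod_(v in S) (if kind D v == Some true then 1 else -1).

Definition coef D (m : nat) : int :=
  \sum_(S : {set N} | [&& S \subset crossings D, #|S| == m,
                          coherent D S & descending D S]) sgnS D S.

Definition nabla D : {poly int} :=
  \sum_(m < #|N|.+1) coef D m *: 'X^m.

(* crossing change at c0: exchange over/under strand labels *)
Definition swap_at (c0 : N) (x : 'I_n + (N * bool)) : 'I_n + (N * bool) :=
  match x with
  | inr (v, b) => if v == c0 then inr (v, ~~ b) else x
  | _ => x
  end.

End Nabla.

(* Main.v *)
Require Import Defs.
From HB Require Import structures.
From mathcomp Require Import all_boot all_order all_algebra all_fingroup.
Import GRing.Theory.
Local Open Scope ring_scope.

Section Aux.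
Variables (n : nat) (N : finType).

Lemma walk_ext (D1 D2 : tdiag n N) :
  (forall v, kind D1 v = kind D2 v) -> (forall x, link D1 x = link D2 x) ->
  forall f x, walk_aux D1 f x = walk_aux D2 f x.
Proof.
move=> Hk Hl; elim=> [|f IH] x //=.
rewrite Hl; case: (link D2 x) => //= e.
by rewrite /pass Hk IH.
Qed.

Variable c0 : N.
Definition sw (e : N * bool) : N * bool :=
  let (v, b) := e in if v == c0 then (v, ~~ b) else (v, b).

Arguments sw : simpl never.
Lemma swK : involutive sw.
Proof. by case=> v b; rewrite /sw; case: eqP => [->|/eqP ne] /=; rewrite ?eqxx ?negbK ?(negbTE ne). Qed.

Lemma sw_inj : injective sw. Proof. exact: inv_inj swK. Qed.

Lemma swap_inr e : swap_at c0 (inr e : 'I_n + (N * bool)) = inr (sw e).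
Proof. by case: e => v b; rewrite /sw /=; case: ifP. Qed.

Lemma swap_atK : involutive (@swap_at n N c0).
Proof. by case=> [k|e] //; rewrite !swap_inr swK. Qed.

Lemma walk_sw (D1 D2 : tdiag n N) :
  (forall x, link D2 (swap_at c0 x) = swap_at c0 (link D1 x)) ->
  (forall e, pass D2 (sw e) = sw (pass D1 e)) ->
  forall f x, walk_aux D2 f (swap_at c0 x) =
     (map sw (walk_aux D1 f x).1, (walk_aux D1 f x).2).
Proof.
move=> Hl Hp; elim=> [|f IH] x //=.
rewrite Hl.
case: (link D1 x) => [k|e] //.
by rewrite swap_inr /= Hp -swap_inr IH.
Qed.

End Aux.
Arguments sw {N} c0 e.
Arguments swK {N} c0 _.
Arguments sw_inj {N} c0 [x1 x2].
Arguments swap_atK {n N} c0 _.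
Arguments swap_inr {n N} c0 e.
Arguments walk_ext {n N} D1 D2.


Definition term n (N : finType) (D : tdiag n N) (S : {set N}) : {poly int} :=
  if [&& S \subset crossings D, coherent D S & descending D S]
  then sgnS D S *: 'X^#|S| else 0.

Arguments term {n N} D S.

Lemma nabla_sum n (N : finType) (D : tdiag n N) :
  nabla D = \sum_(S : {set N}) term D S.
Proof.
rewrite /nabla /coef.
under eq_bigr => m _ do rewrite scaler_suml big_mkcond /=.
rewrite exchange_big /=; apply: eq_bigr => S _.
have cS : (#|S| < #|N|.+1)%N by rewrite ltnS max_card.
rewrite (bigD1 (Ordinal cS)) //= big1 ?addr0.
  by rewrite /term eqxx /=.
move=> m /negbTE ne; case: ifP => // /and4P[_ /eqP e _ _].
by move: ne; rewrite -val_eqE /= e eqxx.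
Qed.

Lemma forall_D1 (T : finType) (S : {set T}) (c : T) (P : pred T) :
  c \in S -> [forall v in S, P v] = P c && [forall v in S :\ c, P v].
Proof.
move=> cS; apply/forallP/andP => [H|[Hc H] v].
  split; first by have /implyP := H c; apply.
  by apply/forallP => v; apply/implyP; rewrite in_setD1 => /andP[_ vS];
     have /implyP := H v; apply.
apply/implyP => vS; case: (eqVneq v c) => [->//|ne].
by have /implyP := (forallP H) v; apply; rewrite in_setD1 ne.
Qed.

Section Main.
Variables (n : nat) (N : finType) (c0 : N) (Tp Tm T0 : tdiag n N).
Hypotheses (Hp : kind Tp c0 = Some true) (Hm : kind Tm c0 = Some false)
  (H0 : kind T0 c0 = None)
  (Hk : forall v, v != c0 -> kind Tm v = kind Tp v /\ kind T0 v = kind Tp v)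
  (Hlm : forall x, link Tm x = swap_at c0 (link Tp (swap_at c0 x)))
  (Hl0 : forall x, link T0 x = link Tp x).

Lemma walkTm (S : {set N}) (k : 'I_n) : walk (smoothS Tm S) k =
  (map (sw c0) (walk (smoothS Tp S) k).1, (walk (smoothS Tp S) k).2).
Proof.
rewrite /walk; have := @walk_sw n N c0 (smoothS Tp S) (smoothS Tm S) _ _
   (2 * #|N|).+1 (inl k); apply.
  by move=> x /=; rewrite Hlm swap_atK.
case=> v b; rewrite /pass /sw /=; case: (eqVneq v c0) => [->|ne] /=.
  by case: (c0 \in S); rewrite ?Hp ?Hm //= negbK.
by rewrite (proj1 (Hk v ne)).
Qed.

Lemma walkT0 (S : {set N}) (k : 'I_n) : c0 \in S -> walk (smoothS T0 (S :\ c0)) k = walk (smoothS Tp S) k.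
Proof.
move=> cS; rewrite /walk; apply: walk_ext => [v|x] /=; last exact: Hl0.
rewrite in_setD1; case: (eqVneq v c0) => [->|ne] /=; first by rewrite cS H0.
by rewrite (proj2 (Hk v ne)).
Qed.

Lemma travTm (S : {set N}) : traversal (smoothS Tm S) = map (sw c0) (traversal (smoothS Tp S)).
Proof.
rewrite /traversal map_flatten -map_comp; congr flatten; apply: eq_map => k /=.
by rewrite walkTm.
Qed.

Lemma travT0 (S : {set N}) : c0 \in S -> traversal (smoothS T0 (S :\ c0)) = traversal (smoothS Tp S).
Proof. by move=> cS; rewrite /traversal; congr flatten; apply: eq_map => k; rewrite walkT0. Qed.

Lemma cohTm (S : {set N}) : coherent Tm S = coherent Tp S.
Proof.
rewrite /coherent /coherent_order; congr andb; last first.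
  by apply: eq_forallb => k; rewrite walkTm.
rewrite /no_closed; apply/forallP/forallP => H e.
  have /existsP[k] := H (sw c0 e); rewrite walkTm /= (mem_map (sw_inj c0)) => ?.
  by apply/existsP; exists k.
have /existsP[k] := H (sw c0 e) => ?; apply/existsP; exists k.
by rewrite walkTm /= -(swK c0 e) (mem_map (sw_inj c0)).
Qed.

Lemma cohT0 (S : {set N}) : c0 \in S -> coherent T0 (S :\ c0) = coherent Tp S.
Proof.
move=> cS; rewrite /coherent /coherent_order /no_closed.
by congr andb; [apply: eq_forallb => e; apply: eq_existsb => k|apply: eq_forallb => k];
  rewrite walkT0.
Qed.

Lemma idxTm (S : {set N}) (v : N) (b : bool) : index (v, b) (traversal (smoothS Tm S)) =
   index (sw c0 (v, b)) (traversal (smoothS Tp S)).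
Proof. by rewrite travTm -{1}(swK c0 (v, b)) (index_map (sw_inj c0)). Qed.

Lemma sw_ne (v : N) (b : bool) : v != c0 -> sw c0 (v, b) = (v, b).
Proof. by move=> ne; rewrite /sw (negbTE ne). Qed.



Lemma crossTm : crossings Tm = crossings Tp.
Proof.
apply/setP => v; rewrite !inE; case: (eqVneq v c0) => [->|ne]; first by rewrite Hp Hm.
by rewrite (proj1 (Hk v ne)).
Qed.

Lemma crossT0 : crossings T0 = crossings Tp :\ c0.
Proof.
apply/setP => v; rewrite !inE; case: (eqVneq v c0) => [->|ne]; first by rewrite H0.
by rewrite (proj2 (Hk v ne)).
Qed.

Lemma c0cross : c0 \in crossings Tp.
Proof. by rewrite inE Hp. Qed.

Lemma termTm_out (S : {set N}) : c0 \notin S -> term Tm S = term Tp S.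
Proof.
move=> cS; rewrite /term crossTm cohTm.
have -> : descending Tm S = descending Tp S.
  rewrite /descending; apply: eq_forallb => v; case vS: (v \in S) => //=.
  have ne : v != c0 by apply: contraNneq cS => <-.
  by rewrite !idxTm !sw_ne.
have -> : sgnS Tm S = sgnS Tp S.
  apply: eq_bigr => v vS; have ne : v != c0 by apply: contraNneq cS => <-.
  by rewrite (proj1 (Hk v ne)).
by [].
Qed.



Lemma term_in (S : {set N}) : c0 \in S ->
  term Tp S - term Tm S = 'X * term T0 (S :\ c0).
Proof.
move=> cS; set S' := S :\ c0.
set t := traversal (smoothS Tp S).
have Esub : (S \subset crossings Tp) = (S' \subset crossings T0).
  by rewrite crossT0 subsetD1 setD11 andbT -{1}(setD1K cS) subUset sub1set c0cross.
have Ecard : #|S| = #|S'|.+1 by rewrite (cardsD1 c0 S) cS.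
have EsP : sgnS Tp S = sgnS T0 S'.
  rewrite /sgnS (bigD1 c0 cS) /= Hp eqxx mul1r; apply: eq_big => [v|v].
    by rewrite in_setD1 andbC.
  by move=> /andP[_ ne]; rewrite (proj2 (Hk v ne)).
have EsM : sgnS Tm S = - sgnS T0 S'.
  rewrite /sgnS (bigD1 c0 cS) /= Hm /= mulN1r; congr (- _); apply: eq_big => [v|v].
    by rewrite in_setD1 andbC.
  by move=> /andP[_ ne]; rewrite (proj2 (Hk v ne)) (proj1 (Hk v ne)).
have EdP : descending Tp S =
    (index (c0, true) t < index (c0, false) t)%N && descending T0 S'.
  by rewrite /descending travT0 // (forall_D1 _ _ _ _ cS).
have EdM : descending Tm S =
    (index (c0, false) t < index (c0, true) t)%N && descending T0 S'.
  rewrite /descending travT0 // (forall_D1 _ _ _ _ cS) !idxTm /sw eqxx /=; congr andb.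
  apply: eq_forallb => v; case vS: (v \in S') => //=.
  have ne : v != c0 by move: vS; rewrite in_setD1 => /andP[].
  by rewrite !idxTm !sw_ne.
rewrite /term -Esub cohT0 // cohTm crossTm EdP EdM EsP EsM Ecard.
case: (S \subset crossings Tp) => /=; last by rewrite mulr0 subr0.
case Hc: (coherent Tp S) => /=; last by rewrite mulr0 subr0.
case: (descending T0 S'); rewrite /= ?andbF ?mulr0 ?subr0 //.
have mem b : (c0, b) \in t.
  move: Hc => /andP[/forallP /(_ (c0, b)) /existsP[k kin] _].
  by apply/flatten_mapP; exists k => //; rewrite mem_enum.
have ne : index (c0, true) t != index (c0, false) t.
  apply/negP => /eqP E; have := nth_index (c0, true) (mem true).
  by rewrite E nth_index.
rewrite ltnNge leq_eqVlt eq_sym (negbTE ne) /=.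
case: ltnP => _ /=; rewrite ?subr0 ?sub0r ?scaleNr ?opprK exprS scalerAr //.
Qed.



Definition tog (S : {set N}) := if c0 \in S then S :\ c0 else c0 |: S.

Lemma togK : involutive tog.
Proof.
move=> S; rewrite /tog; case cS: (c0 \in S).
  by rewrite setD11 setD1K.
by rewrite setU11 setU1K ?cS.
Qed.

Lemma main_sec : nabla Tp - nabla Tm = 'X * nabla T0.
Proof.
rewrite !nabla_sum -sumrB mulr_sumr.
rewrite (bigID (fun S : {set N} => c0 \in S)) /=.
rewrite [in RHS](bigID (fun S : {set N} => c0 \in S)) /=.
rewrite [X in _ + X = _]big1 => [|S cS]; last by rewrite termTm_out ?subrr.
rewrite [X in _ = X + _]big1 => [|S cS]; last first.
  by rewrite /term crossT0 subsetD1 cS andbF /= mulr0.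
rewrite addr0 add0r (reindex_inj (inv_inj togK)) /=.
apply: eq_big => [S|S cS]; first by rewrite /tog; case: (c0 \in S); rewrite ?setD11 ?setU11.
have nS : c0 \notin S by move: cS; rewrite /tog; case: ifP => // _; rewrite setD11.
have E : tog S = c0 |: S by rewrite /tog (negbTE nS).
by rewrite term_in // E setU1K.
Qed.

End Main.

Theorem mainTheorem3 (n : nat) (N : finType) (c0 : N) (Tp Tm T0 : tdiag n N) :
  (0 < n)%N ->
  kind Tp c0 = Some true ->
  kind Tm c0 = Some false ->
  kind T0 c0 = None ->
  (forall v, v != c0 -> kind Tm v = kind Tp v /\ kind T0 v = kind Tp v) ->
  (forall x, link Tm x = swap_at c0 (link Tp (swap_at c0 x))) ->
  (forall x, link T0 x = link Tp x) ->
  nabla Tp - nabla Tm = 'X * nabla T0.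
Proof.
move=> _ Hp Hm H0 Hk Hlm Hl0.
exact (@main_sec n N c0 Tp Tm T0 Hp Hm H0 Hk Hlm Hl0).
Qed.
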